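(* Let $\mathbb{T}$ be a time scale, $\alpha\in]0,1]$, and let $f:\mathbb{T}\to\mathbb{R}$ be both delta and nabla fractional differentiable of order $\alpha$. Then $f$ is symmetric fractional differentiable of order $\alpha$ and, for each $t\in\mathbb{T}_\kappa^\kappa$, $$f^{\diamondsuit^\alpha}(t)=\gamma_1(t)f^{\Delta^\alpha}(t)+\gamma_2(t)f^{\nabla^\alpha}(t),$$ where $$\gamma_1(t):=\lim_{s\to t}\left[\frac{\sigma(t)-s}{\sigma(t)+2t-2s-\rho(t)}\right]^\alpha,\qquad \gamma_2(t):=\lim_{s\to t}\left[\frac{(2t-s)-\rho(t)}{\sigma(t)+2t-2s-\rho(t)}\right]^\alpha.$$
   Context: A time scale $\mathbb{T}$ is a nonempty closed subset of $\mathbb{R}$. $\sigma(t)=\inf\{s\in\mathbb{T}:s>t\}$ ($\inf\emptyset=\sup\mathbb{T}$), $\rho(t)=\sup\{s\in\mathbb{T}:s<t\}$ ($\sup\emptyset=\inf\mathbb{T}$); $f^\sigma=f\circ\sigma$, $f^\rho=f\circ\rho$. $\mathbb{T}^\kappa=\mathbb{T}\setminus\{\sup\mathbb{T}\}$ if $\sup\mathbb{T}$ is finite and left-scattered, else $\mathbb{T}$; $\mathbb{T}_\kappa=\mathbb{T}\setminus\{\inf\mathbb{T}\}$ if $\inf\mathbb{T}$ is finite and right-scattered, else $\mathbb{T}$; $\mathbb{T}_\kappa^\kappa=\mathbb{T}_\kappa\cap\mathbb{T}^\kappa$. Let $A=\,]0,1]\cap\{1/q: q\text{ odd positive integer}\}$,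 with $x^{1/q}$ the real $q$-th root. Nabla fractional derivative of order $\alpha$ at $t\in\mathbb{T}_\kappa$: the number $f^{\nabla^\alpha}(t)$ (if it exists) such that for every $\varepsilon>0$ there is $\delta>0$ with $\big|[f(s)-f^\rho(t)]-f^{\nabla^\alpha}(t)[s-\rho(t)]^\alpha\big|\le\varepsilon|s-\rho(t)|^\alpha$ for all $s\in\,]t-\delta,t+\delta[\,\cap\mathbb{T}$ if $\alpha\in A$, resp. all $s\in[t,t+\delta[\,\cap\mathbb{T}$ if $\alpha\notin A$. Delta fractional derivative of order $\alpha$ at $t\in\mathbb{T}^\kappa$: the number $f^{\Delta^\alpha}(t)$ (if it exists) such that for every $\varepsilon>0$ there is $\delta>0$ with $\big|[f^\sigma(t)-f(s)]-f^{\Delta^\alpha}(t)[\sigma(t)-s]^\alpha\big|\le\varepsilon|\sigma(t)-s|^\alpha$ for all $s\in\,]t-\delta,t+\delta[\,\cap\mathbb{T}$ if $\alpha\in A$, resp. all $s\in\,]t-\delta,t]\cap\mathbb{T}$ if $\alpha\notin A$. Symmetric fractional derivative of order $\alpha$ at $t\in\mathbb{T}_\kappa^\kappa$: the number $f^{\diamondsuit^\alpha}(t)$ (if it exists) such that for every $\varepsilon>0$ there is a neighborhood $U\subset\mathbb{T}$ of $t$ with $\big|[f^\sigma(t)-f(s)+f(2t-s)-f^\rho(t)]-f^{\diamondsuit^\alpha}(t)[\sigma(t)+2t-2s-\rho(t)]^\alpha\big|\le\varepsilon|\sigma(t)+2t-2s-\rho(t)|^\alpha$ for all $s\in U$ with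 $2t-s\in U$. A function is (delta/nabla/symmetric) fractional differentiable of order $\alpha$ if the corresponding derivative exists at every point of its domain of definition ($\mathbb{T}^\kappa$, $\mathbb{T}_\kappa$, $\mathbb{T}_\kappa^\kappa$ respectively). Limits $s\to t$ are over $s\in\mathbb{T}$, $s\ne t$. *)

(* Defs.v *)
From Stdlib Require Import Reals.
From Coquelicot Require Import Coquelicot.
Open Scope R_scope.

Definition time_scale (T : R -> Prop) : Prop :=
  (exists x, T x) /\
  (forall x, (forall eps, 0 < eps -> exists y, T y /\ Rabs (y - x) < eps) -> T x).

(* forward jump sigma(t) = inf {s in T | s > t}; if that set is empty
   (t = max T) this is sup T = t.  Only used at points t of T. *)
Definition ts_sigma (T : R -> Prop) (t : R) : R :=
  match Glb_Rbar (fun s => T s /\ t < s) with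
  | Finite x => x
  | _ => t
  end.

(* backward jump rho(t) = sup {s in T | s < t}; empty => inf T = t. *)
Definition ts_rho (T : R -> Prop) (t : R) : R :=
  match Lub_Rbar (fun s => T s /\ s < t) with
  | Finite x => x
  | _ => t
  end.

(* T^kappa : remove sup T if it is finite and left-scattered
   (a finite sup of a closed set belongs to it and is its maximum). *)
Definition T_kappa_up (T : R -> Prop) (t : R) : Prop :=
  T t /\ ~ ((forall s, T s -> s <= t) /\ ts_rho T t < t).

Definition T_kappa_low (T : R -> Prop) (t : R) : Prop :=
  T t /\ ~ ((forall s, T s -> t <= s) /\ t < ts_sigma T t).

Definition T_kappa_both (T : R -> Prop) (t : R) : Prop :=
  T_kappa_low T t /\ T_kappa_up T t.

Definition in_A (alpha : R) : Prop :=
  exists q : nat, Nat.odd q = true /\ alpha = 1 / INR q.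

(* Power x^alpha: x^alpha for x >= 0 (0^alpha = 0, alpha > 0), extended oddly
   to x < 0.  For alpha = 1/q in A this is exactly the real q-th root. *)
Definition fpow (alpha x : R) : R :=
  if Rlt_dec 0 x then Rpower x alpha
  else if Rlt_dec x 0 then - Rpower (- x) alpha
  else 0.

Definition is_nabla_fd (T : R -> Prop) (alpha : R) (f : R -> R) (t D : R) : Prop :=
  forall eps, 0 < eps -> exists delta, 0 < delta /\
    forall s, T s ->
      (in_A alpha -> t - delta < s < t + delta) ->
      (~ in_A alpha -> t <= s < t + delta) ->
      Rabs ((f s - f (ts_rho T t)) - D * fpow alpha (s - ts_rho T t))
        <= eps * fpow alpha (Rabs (s - ts_rho T t)).

Definition is_delta_fd (T : R -> Prop) (alpha : R) (f : R -> R) (t D : R) : Prop :=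
  forall eps, 0 < eps -> exists delta, 0 < delta /\
    forall s, T s ->
      (in_A alpha -> t - delta < s < t + delta) ->
      (~ in_A alpha -> t - delta < s <= t) ->
      Rabs ((f (ts_sigma T t) - f s) - D * fpow alpha (ts_sigma T t - s))
        <= eps * fpow alpha (Rabs (ts_sigma T t - s)).

Definition is_sym_fd (T : R -> Prop) (alpha : R) (f : R -> R) (t D : R) : Prop :=
  forall eps, 0 < eps -> exists U : R -> Prop,
    (forall x, U x -> T x) /\
    (exists delta, 0 < delta /\ forall x, T x -> Rabs (x - t) < delta -> U x) /\
    forall s, U s -> U (2 * t - s) ->
      Rabs ((f (ts_sigma T t) - f s + f (2 * t - s) - f (ts_rho T t))
             - D * fpow alpha (ts_sigma T t + 2 * t - 2 * s - ts_rho T t))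
        <= eps * fpow alpha (Rabs (ts_sigma T t + 2 * t - 2 * s - ts_rho T t)).

Definition delta_fd_differentiable (T : R -> Prop) (alpha : R) (f : R -> R) : Prop :=
  forall t, T_kappa_up T t -> exists D, is_delta_fd T alpha f t D.

Definition nabla_fd_differentiable (T : R -> Prop) (alpha : R) (f : R -> R) : Prop :=
  forall t, T_kappa_low T t -> exists D, is_nabla_fd T alpha f t D.

Definition sym_fd_differentiable (T : R -> Prop) (alpha : R) (f : R -> R) : Prop :=
  forall t, T_kappa_both T t -> exists D, is_sym_fd T alpha f t D.

Definition lim_in (T : R -> Prop) (t : R) (g : R -> R) (l : R) : Prop :=
  forall eps, 0 < eps -> exists delta, 0 < delta /\
    forall s, T s -> s <> t -> Rabs (s - t) < delta -> Rabs (g s - l) < eps.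

(* Main.v *)
Require Import Defs.
From Stdlib Require Import Reals Lra.
From Coquelicot Require Import Coquelicot.
Open Scope R_scope.

Lemma cpt_eps g x : continuity_pt g x ->
  forall eps, 0 < eps -> exists d, 0 < d /\ forall y, Rabs (y - x) < d -> Rabs (g y - g x) < eps.
Proof.
  intros H eps He. destruct (H eps He) as [d [Hd Hy]]. exists d; split; auto.
  intros y Hyx. destruct (Req_dec y x) as [->|Hne].
  - rewrite Rminus_diag, Rabs_R0; auto.
  - apply (Hy y). split; [split; [exact I| auto] | exact Hyx].
Qed.

Lemma rat_cont c b t : b - 2 * t <> 0 ->
  continuity_pt (fun s => (c - s) / (b - 2 * s)) t.
Proof. intros H. reg. Qed.

Lemma fpow0 a : fpow a 0 = 0.
Proof. unfold fpow; destruct (Rlt_dec 0 0); [lra|]; destruct (Rlt_dec 0 0); [lra|]; auto. Qed.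

Lemma fpow_pos a x : 0 < x -> fpow a x = Rpower x a.
Proof. intros H; unfold fpow; destruct (Rlt_dec 0 x); [auto|lra]. Qed.

Lemma Rpower_pos x a : 0 < Rpower x a.
Proof. unfold Rpower; apply exp_pos. Qed.

Lemma fpow_opp a x : fpow a (- x) = - fpow a x.
Proof.
  unfold fpow.
  destruct (Rlt_dec 0 (-x)); destruct (Rlt_dec 0 x); try lra;
  destruct (Rlt_dec (-x) 0); destruct (Rlt_dec x 0); try lra;
  rewrite ?Ropp_involutive; lra.
Qed.

Lemma fpow_nonneg a x : 0 <= x -> 0 <= fpow a x.
Proof.
  intros H; destruct (Req_dec x 0) as [->|Hn]; [rewrite fpow0; lra|].
  rewrite fpow_pos by lra; apply Rlt_le, Rpower_pos.
Qed.

Lemma fpow_mono a x y : 0 <= a -> 0 <= x <= y -> fpow a x <= fpow a y.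
Proof.
  intros Ha [H1 H2]; destruct (Req_dec x 0) as [->|Hn].
  - rewrite fpow0; apply fpow_nonneg; lra.
  - rewrite !fpow_pos by lra; apply Rle_Rpower_l; lra.
Qed.

Lemma fpow_mult a x y : 0 <= x -> 0 <= y -> fpow a (x * y) = fpow a x * fpow a y.
Proof.
  intros Hx Hy.
  destruct (Req_dec x 0) as [->|Hx']; [rewrite Rmult_0_l, fpow0; ring|].
  destruct (Req_dec y 0) as [->|Hy']; [rewrite Rmult_0_r, fpow0; ring|].
  rewrite !fpow_pos by nra. rewrite Rpower_mult_distr; auto; lra.
Qed.

Lemma fpow_cont a x : 0 < a -> 0 <= x ->
  forall eps, 0 < eps -> exists d, 0 < d /\ forall y, Rabs (y - x) < d -> Rabs (fpow a y - fpow a x) < eps.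
Proof.
  intros Ha Hx. destruct (Req_dec x 0) as [->|Hx'].
  - intros eps He. exists (Rpower eps (/ a)); split; [apply Rpower_pos|].
    intros y Hy. rewrite fpow0, Rminus_0_r in *.
    assert (Hab : Rabs (fpow a y) = fpow a (Rabs y)).
    { unfold Rabs at 2; destruct (Rcase_abs y).
      - replace y with (- - y) at 1 by ring. rewrite fpow_opp, Rabs_Ropp.
        apply Rabs_right, Rle_ge, fpow_nonneg; lra.
      - apply Rabs_right, Rle_ge, fpow_nonneg; lra. }
    rewrite Hab. destruct (Req_dec y 0) as [->|Hy'].
    + rewrite Rabs_R0, fpow0; auto.
    + rewrite fpow_pos by (apply Rabs_pos_lt; auto).
      replace eps with (Rpower (Rpower eps (/ a)) a).
      * apply Rlt_Rpower_l; auto. split; auto. apply Rabs_pos_lt; auto.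
      * rewrite Rpower_mult, Rinv_l by lra. apply Rpower_1; auto.
  - apply cpt_eps.
    apply (continuity_pt_locally_ext (fun y => Rpower y a) _ x x); [lra| |].
    + intros y Hy. unfold Rdist in Hy. rewrite fpow_pos; auto.
      apply Rabs_def2 in Hy; lra.
    + apply derivable_continuous_pt.
      exists (a * Rpower x (a - 1)). apply derivable_pt_lim_power; lra.
Qed.

Lemma LIM a sg rh t c : 0 < a -> rh <= t <= sg -> t <= c -> (sg = rh -> c = t) ->
  forall eps, 0 < eps -> exists d, 0 < d /\ forall s, s <> t -> Rabs (s - t) < d ->
  Rabs (fpow a ((c - s) / (sg + 2 * t - 2 * s - rh)) -
        (if Rlt_dec rh sg then fpow a ((c - t) / (sg - rh)) else fpow a (/ 2))) < eps.
Proof.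
  intros Ha Ht Hc Hd eps He. destruct (Rlt_dec rh sg) as [Hl|Hl].
  - destruct (fpow_cont a ((c - t) / (sg - rh)) Ha) with (eps := eps) as [d1 [Hd1 P1]]; auto.
    { apply Rdiv_le_0_compat; lra. }
    destruct (cpt_eps _ _ (rat_cont c (sg + 2 * t - rh) t ltac:(lra)) d1 Hd1) as [d2 [Hd2 P2]].
    exists d2; split; auto. intros s _ Hs. apply P1.
    specialize (P2 s Hs).
    replace (sg + 2 * t - 2 * s - rh) with (sg + 2 * t - rh - 2 * s) by ring.
    replace ((c - t) / (sg - rh)) with ((c - t) / (sg + 2 * t - rh - 2 * t)).
    + exact P2.
    + f_equal; ring.
  - assert (sg = t /\ rh = t) as [-> ->] by lra. rewrite Hd by auto.
    exists 1; split; [lra|]. intros s Hs _.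
    replace ((t - s) / (t + 2 * t - 2 * s - t)) with (/ 2).
    + rewrite Rminus_diag, Rabs_R0; auto.
    + field. intro; apply Hs; lra.
Qed.

Lemma sigma_facts T t : T t -> t <= ts_sigma T t /\
  forall s, T s -> t < s -> ts_sigma T t <= s.
Proof.
  intros Ht. unfold ts_sigma.
  pose proof (Glb_Rbar_correct (fun s => T s /\ t < s)) as [H1 H2]. revert H1 H2.
  destruct (Glb_Rbar (fun s => T s /\ t < s)) as [x| |]; intros H1 H2.
  - split.
    + apply (H2 (Finite t)). intros y [_ Hy]. simpl; lra.
    + intros s Hs Hts. apply (H1 s); auto.
  - split; [lra|]. intros s Hs Hts. exfalso. apply (H1 s); auto.
  - exfalso. apply (H2 (Finite t)). intros y [_ Hy]. simpl; lra.
Qed.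

Lemma rho_facts T t : T t -> ts_rho T t <= t /\
  forall s, T s -> s < t -> s <= ts_rho T t.
Proof.
  intros Ht. unfold ts_rho.
  pose proof (Lub_Rbar_correct (fun s => T s /\ s < t)) as [H1 H2]. revert H1 H2.
  destruct (Lub_Rbar (fun s => T s /\ s < t)) as [x| |]; intros H1 H2.
  - split.
    + apply (H2 (Finite t)). intros y [_ Hy]. simpl; lra.
    + intros s Hs Hts. apply (H1 s); auto.
  - exfalso. apply (H2 (Finite t)). intros y [_ Hy]. simpl; lra.
  - split; [lra|]. intros s Hs Hts. exfalso. apply (H1 s); auto.
Qed.

Lemma piece a A B G e : 0 < a -> 0 <= A -> 0 <= B -> 0 <= e ->
  (0 < A + B -> Rabs (fpow a (A / (A + B)) - G) <= e) ->
  Rabs (fpow a A - G * fpow a (A + B)) <= e * fpow a (A + B).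
Proof.
  intros Ha HA HB He H. destruct (Req_dec (A + B) 0) as [H0|H0].
  - assert (A = 0) as -> by lra. rewrite H0, !fpow0.
    rewrite Rmult_0_r, Rminus_0_r, Rabs_R0; lra.
  - assert (Hp : 0 < A + B) by lra. specialize (H Hp).
    assert (E : fpow a A = fpow a (A / (A + B)) * fpow a (A + B)).
    { rewrite <- fpow_mult; [f_equal; field; lra| |lra].
      apply Rdiv_le_0_compat; lra. }
    rewrite E.
    replace (fpow a (A / (A + B)) * fpow a (A + B) - G * fpow a (A + B))
      with ((fpow a (A / (A + B)) - G) * fpow a (A + B)) by ring.
    rewrite Rabs_mult, (Rabs_pos_eq (fpow a (A + B))) by (apply fpow_nonneg; lra).
    apply Rmult_le_compat_r; auto. apply fpow_nonneg; lra.
Qed.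

Lemma combine u v dD dN fA fB F G1 G2 e : 0 <= e -> fA <= F -> fB <= F ->
  0 <= fA -> 0 <= fB ->
  Rabs (u - dD * fA) <= e * fA -> Rabs (v - dN * fB) <= e * fB ->
  Rabs (fA - G1 * F) <= e * F -> Rabs (fB - G2 * F) <= e * F ->
  Rabs (u + v - (G1 * dD + G2 * dN) * F) <= e * (2 + Rabs dD + Rabs dN) * F.
Proof.
  intros He h1 h2 h3 h4 H1 H2 H3 H4.
  replace (u + v - (G1 * dD + G2 * dN) * F) with
    ((u - dD * fA) + (v - dN * fB) + (dD * (fA - G1 * F) + dN * (fB - G2 * F))) by ring.
  eapply Rle_trans; [apply Rabs_triang|].
  eapply Rle_trans; [apply Rplus_le_compat; [apply Rabs_triang | apply Rabs_triang]|].
  rewrite !Rabs_mult.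
  assert (Rabs dD * Rabs (fA - G1 * F) <= Rabs dD * (e * F))
    by (apply Rmult_le_compat_l; auto; apply Rabs_pos).
  assert (Rabs dN * Rabs (fB - G2 * F) <= Rabs dN * (e * F))
    by (apply Rmult_le_compat_l; auto; apply Rabs_pos).
  assert (e * fA <= e * F) by (apply Rmult_le_compat_l; auto).
  assert (e * fB <= e * F) by (apply Rmult_le_compat_l; auto).
  nra.
Qed.

Lemma main_sym T a f t dD dN : 0 < a -> T t ->
  is_delta_fd T a f t dD -> is_nabla_fd T a f t dN ->
  exists g1 g2,
    lim_in T t (fun s => fpow a ((ts_sigma T t - s)
                   / (ts_sigma T t + 2 * t - 2 * s - ts_rho T t))) g1 /\
    lim_in T t (fun s => fpow a (((2 * t - s) - ts_rho T t)
                   / (ts_sigma T t + 2 * t - 2 * s - ts_rho T t))) g2 /\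
    is_sym_fd T a f t (g1 * dD + g2 * dN).
Proof.
  intros Ha Ht HD HN.
  destruct (sigma_facts T t Ht) as [Sg1 Sg2].
  destruct (rho_facts T t Ht) as [Rh1 Rh2].
  unfold is_delta_fd, is_nabla_fd, is_sym_fd in *.
  set (sg := ts_sigma T t) in *. set (rh := ts_rho T t) in *.
  pose proof (LIM a sg rh t sg Ha ltac:(lra) ltac:(lra) ltac:(lra)) as L1.
  pose proof (LIM a sg rh t (2 * t - rh) Ha ltac:(lra) ltac:(lra) ltac:(lra)) as L2.
  set (G1 := if Rlt_dec rh sg then fpow a ((sg - t) / (sg - rh)) else fpow a (/ 2)) in *.
  set (G2 := if Rlt_dec rh sg then fpow a ((2 * t - rh - t) / (sg - rh)) else fpow a (/ 2)) in *.
  exists G1, G2. split; [|split].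
  - intros eps He. destruct (L1 eps He) as [d [Hd P]]. exists d; split; [exact Hd|].
    intros s _ Hs Hd'. apply P; auto.
  - intros eps He. destruct (L2 eps He) as [d [Hd P]]. exists d; split; [exact Hd|].
    intros s _ Hs Hd'. replace (2 * t - s - rh) with (2 * t - rh - s) by ring. apply P; auto.
  - intros eps He.
    set (K := 2 + Rabs dD + Rabs dN).
    assert (HK : 0 < K) by (unfold K; pose proof (Rabs_pos dD); pose proof (Rabs_pos dN); lra).
    set (e' := eps / K).
    assert (He' : 0 < e') by (unfold e'; apply Rdiv_lt_0_compat; auto).
    destruct (HD e' He') as [dd [Hdd PD]].
    destruct (HN e' He') as [dn [Hdn PN]].
    destruct (L1 e' He') as [d1 [Hd1 P1]].
    destruct (L2 e' He') as [d2 [Hd2 P2]].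
    set (m := fun x => if Rlt_dec 0 x then x else 1).
    assert (Hm : forall x, 0 < m x) by (intro x; unfold m; destruct (Rlt_dec 0 x); lra).
    assert (Hm' : forall x, 0 < x -> m x = x) by (intros x Hx; unfold m; destruct (Rlt_dec 0 x); lra).
    set (del := Rmin (Rmin dd dn) (Rmin (Rmin d1 d2) (Rmin (m (sg - t)) (m (t - rh))))).
    assert (Hdel : 0 < del).
    { unfold del; repeat apply Rmin_pos; auto. }
    assert (Hdd' : del <= dd) by (unfold del; eapply Rle_trans; [apply Rmin_l|apply Rmin_l]).
    assert (Hdn' : del <= dn) by (unfold del; eapply Rle_trans; [apply Rmin_l|apply Rmin_r]).
    assert (Hd1' : del <= d1) by (unfold del; eapply Rle_trans; [apply Rmin_r|];
      eapply Rle_trans; [apply Rmin_l|apply Rmin_l]).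
    assert (Hd2' : del <= d2) by (unfold del; eapply Rle_trans; [apply Rmin_r|];
      eapply Rle_trans; [apply Rmin_l|apply Rmin_r]).
    assert (Hms : del <= m (sg - t)) by (unfold del; eapply Rle_trans; [apply Rmin_r|];
      eapply Rle_trans; [apply Rmin_r|apply Rmin_l]).
    assert (Hmr : del <= m (t - rh)) by (unfold del; eapply Rle_trans; [apply Rmin_r|];
      eapply Rle_trans; [apply Rmin_r|apply Rmin_r]).
    assert (CL : forall s, T s -> Rabs (s - t) < del -> T (2 * t - s) ->
              Rabs (2 * t - s - t) < del -> s <= t ->
      Rabs (f sg - f s + f (2 * t - s) - f rh -
            (G1 * dD + G2 * dN) * fpow a (sg + 2 * t - 2 * s - rh))
      <= eps * fpow a (Rabs (sg + 2 * t - 2 * s - rh))).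
    { intros s Ts Hs Ts2 Hs2 Hst.
      apply Rabs_def2 in Hs. apply Rabs_def2 in Hs2.
      assert (QD := PD s Ts (fun _ => ltac:(lra)) (fun _ => ltac:(lra))).
      assert (QN := PN (2 * t - s) Ts2 (fun _ => ltac:(lra)) (fun _ => ltac:(lra))).
      rewrite (Rabs_pos_eq (sg - s)) in QD by lra.
      rewrite (Rabs_pos_eq (2 * t - s - rh)) in QN by lra.
      assert (Q1 : Rabs (fpow a (sg - s) - G1 * fpow a (sg - s + (2 * t - s - rh)))
                   <= e' * fpow a (sg - s + (2 * t - s - rh))).
      { apply piece; try lra. intros Hp.
        destruct (Req_dec s t) as [->|Hne].
        - unfold G1; destruct (Rlt_dec rh sg); [|lra].
          replace (sg - t + (2 * t - t - rh)) with (sg - rh) by ring.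
          rewrite Rminus_diag, Rabs_R0; lra.
        - left. replace (sg - s + (2 * t - s - rh)) with (sg + 2 * t - 2 * s - rh) by ring.
          apply P1; auto. apply Rabs_def1; lra. }
      assert (Q2 : Rabs (fpow a (2 * t - s - rh) - G2 * fpow a (2 * t - s - rh + (sg - s)))
                   <= e' * fpow a (2 * t - s - rh + (sg - s))).
      { apply piece; try lra. intros Hp.
        destruct (Req_dec s t) as [->|Hne].
        - unfold G2; destruct (Rlt_dec rh sg); [|lra].
          replace (2 * t - t - rh + (sg - t)) with (sg - rh) by ring.
          replace (2 * t - t - rh) with (2 * t - rh - t) by ring.
          rewrite Rminus_diag, Rabs_R0; lra.
        - left. replace (2 * t - s - rh + (sg - s)) with (sg + 2 * t - 2 * s - rh) by ring.
          replace (2 * t - s - rh) with (2 * t - rh - s) by ring.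
          apply P2; auto. apply Rabs_def1; lra. }
      replace (2 * t - s - rh + (sg - s)) with (sg + 2 * t - 2 * s - rh) in Q2 by ring.
      replace (sg - s + (2 * t - s - rh)) with (sg + 2 * t - 2 * s - rh) in Q1 by ring.
      rewrite (Rabs_pos_eq (sg + 2 * t - 2 * s - rh)) by lra.
      replace (f sg - f s + f (2 * t - s) - f rh) with
        ((f sg - f s) + (f (2 * t - s) - f rh)) by ring.
      replace eps with (e' * K) by (unfold e'; field; lra).
      unfold K. apply (combine _ _ _ _ (fpow a (sg - s)) (fpow a (2 * t - s - rh))); auto; try lra.
      - apply fpow_mono; lra.
      - apply fpow_mono; lra.
      - apply fpow_nonneg; lra.
      - apply fpow_nonneg; lra. }
    exists (fun x => T x /\ Rabs (x - t) < del). split; [|split].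
    + intros x [Hx _]; auto.
    + exists del; split; auto.
    + intros s [Ts Hs] [Ts2 Hs2].
      destruct (Rle_dec s t) as [Hst|Hst]; [apply CL; auto|].
      assert (Es : sg = t).
      { destruct (Rlt_dec t sg) as [Hl|Hl]; [|lra].
        rewrite Hm' in Hms by lra. apply Rabs_def2 in Hs.
        specialize (Sg2 s Ts ltac:(lra)). lra. }
      assert (Er : rh = t).
      { destruct (Rlt_dec rh t) as [Hl|Hl]; [|lra].
        rewrite Hm' in Hmr by lra. apply Rabs_def2 in Hs.
        specialize (Rh2 (2 * t - s) Ts2 ltac:(lra)). lra. }
      assert (H := CL (2 * t - s) Ts2 Hs2
                 ltac:(replace (2 * t - (2 * t - s)) with s by ring; auto)
                 ltac:(replace (2 * t - (2 * t - s) - t) with (s - t) by ring; auto)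
                 ltac:(lra)).
      replace (2 * t - (2 * t - s)) with s in H by ring.
      rewrite Es, Er in *.
      replace (t + 2 * t - 2 * (2 * t - s) - t) with (- (t + 2 * t - 2 * s - t)) in H by ring.
      rewrite fpow_opp, Rabs_Ropp in H.
      replace (f t - f s + f (2 * t - s) - f t - (G1 * dD + G2 * dN) * fpow a (t + 2 * t - 2 * s - t))
        with (- (f t - f (2 * t - s) + f s - f t - (G1 * dD + G2 * dN) * - fpow a (t + 2 * t - 2 * s - t)))
        by ring.
      rewrite Rabs_Ropp; exact H.
Qed.

Theorem proposition3p29 (T : R -> Prop) (alpha : R) (f : R -> R) :
  time_scale T -> 0 < alpha <= 1 ->
  delta_fd_differentiable T alpha f ->
  nabla_fd_differentiable T alpha f ->
  sym_fd_differentiable T alpha f /\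
  forall t, T_kappa_both T t ->
  forall dD dN, is_delta_fd T alpha f t dD -> is_nabla_fd T alpha f t dN ->
  exists g1 g2,
    lim_in T t (fun s => fpow alpha ((ts_sigma T t - s)
                   / (ts_sigma T t + 2 * t - 2 * s - ts_rho T t))) g1 /\
    lim_in T t (fun s => fpow alpha (((2 * t - s) - ts_rho T t)
                   / (ts_sigma T t + 2 * t - 2 * s - ts_rho T t))) g2 /\
    is_sym_fd T alpha f t (g1 * dD + g2 * dN).
Proof.
  intros _ [Ha _] HD HN. split.
  - intros t [Hl Hu]. destruct (HD t Hu) as [dD PD]. destruct (HN t Hl) as [dN PN].
    destruct (main_sym T alpha f t dD dN Ha (proj1 Hu) PD PN) as [g1 [g2 [_ [_ H]]]].
    eauto.
  - intros t [_ Hu] dD dN PD PN. exact (main_sym T alpha f t dD dN Ha (proj1 Hu) PD PN).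
Qed.
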